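(* Let $R\in\mathcal{M}$, let $Z_1\le\deg R$ be a non-negative integer and $F\mid R$ monic. Let $C,D\in\mathcal{S}_{\mathcal{M}}(X)$ with $\deg C,\deg D\le\frac1{10}\deg R$. Then $$\sum_{\substack{A,B\in\mathcal{M}\\ \deg AB=Z_1\\ AC\equiv BD \ (\mathrm{mod}\ F)\\ AC\ne BD\\ (AB,R)=1}}\frac{1}{|AB|^{1/2}} \ll \frac{q^{Z_1/2}(Z_1+1)|CD|}{|F|}.$$
   Context: $q$ prime power, $\mathcal{M}$ the monic polynomials of $\mathbb{F}_q[T]$, $|A|=q^{\deg A}$, $X$ a positive integer, $\mathcal{S}_{\mathcal{M}}(X)=\{A\in\mathcal{M}: P\mid A\Rightarrow\deg P\le X\}$ for monic irreducible $P$. *)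

(* Defs.v *)
From Stdlib Require Import Rdefinitions R_sqrt.
From HB Require Import structures.
From mathcomp Require Import all_boot all_order all_algebra all_field.
From mathcomp Require Import Rstruct.
Set Implicit Arguments. Unset Strict Implicit. Unset Printing Implicit Defensive.
Import Order.TTheory GRing.Theory Num.Theory.
Local Open Scope ring_scope.

(* Degree of a polynomial (deg 0 = 0; only applied to monic, hence nonzero, polys) *)
Definition pdeg (K : fieldType) (p : {poly K}) : nat := (size p).-1.

Definition pabs (K : finFieldType) (p : {poly K}) : R :=
  ((#|K|%:R : R) ^+ pdeg p).

Definition monic_deg (K : finFieldType) (d : nat) : seq {poly K} :=
  [seq 'X^d + \sum_(i < d) (tnth t i)%:P * 'X^i | t : d.-tuple K].

Definition monic_le (K : finFieldType) (n : nat) : seq {poly K} :=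
  flatten [seq monic_deg K d | d <- iota 0 n.+1].

Definition smooth (K : fieldType) (X : nat) (A : {poly K}) : Prop :=
  forall P : {poly K}, P \is monic -> irreducible_poly P -> P %| A -> (pdeg P <= X)%N.

(* Main.v *)
Require Import Defs.
From Stdlib Require Import Rdefinitions R_sqrt.
From HB Require Import structures.
From mathcomp Require Import all_boot all_order all_algebra all_field.
From mathcomp Require Import Rstruct zify ring lra.
Import Order.TTheory GRing.Theory Num.Theory.
Local Open Scope ring_scope.


Section Aux.
Variable K : finFieldType.

Lemma low_poly d (t : d.-tuple K) :
  \sum_(i < d) (tnth t i)%:P * 'X^i = \poly_(i < d) (nth (0:K)%R (val t) i).
Proof.
rewrite poly_def; apply: eq_bigr => i _.
by rewrite mul_polyC (tnth_nth (0:K)%R).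
Qed.

Lemma monic_deg_elt d p : p \in monic_deg K d -> p \is monic /\ size p = d.+1.
Proof.
case/mapP => t _ ->; rewrite low_poly.
have hs : (size (\poly_(i < d) (nth (0:K)%R (val t) i)) < size ('X^d : {poly K}))%N.
  by rewrite size_polyXn ltnS size_poly.
split; first by rewrite monicE lead_coefDl // lead_coefXn.
by rewrite size_polyDl // size_polyXn.
Qed.

Lemma monic_deg_uniq d : uniq (monic_deg K d).
Proof.
rewrite /monic_deg map_inj_uniq ?enum_uniq // => t1 t2.
rewrite !low_poly => /polyP E.
apply: eq_from_tnth => i; rewrite !(tnth_nth (0:K)%R).
have := E i; rewrite !coefD !coef_poly coefXn ltn_ord.
by rewrite (ltn_eqF (ltn_ord i)) !add0r.
Qed.

Lemma monic_le_elt n p : p \in monic_le K n -> p \is monic /\ (size p <= n.+1)%N.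
Proof.
case/flatten_mapP => d; rewrite mem_iota add0n => /andP[_ hd] /monic_deg_elt [m ->].
by split.
Qed.

Lemma flatten_uniq_aux (s : seq nat) : uniq s -> uniq (flatten [seq monic_deg K d | d <- s]).
Proof.
elim: s => //= d s IH /andP[nd us].
rewrite cat_uniq monic_deg_uniq IH // andbT /=.
apply/hasPn => p /flatten_mapP [d' d's /monic_deg_elt [_ h1]].
apply/negP => /monic_deg_elt [_ h2].
move: nd; have -> : d = d' by move: h1 h2 => -> [].
by rewrite d's.
Qed.

Lemma monic_le_uniq n : uniq (monic_le K n).
Proof. exact/flatten_uniq_aux/iota_uniq. Qed.


Lemma ar1 sa sb sc sd sf sh Z1 x : (0 < sa)%N -> (0 < sb)%N -> (0 < sc)%N -> (0 < sd)%N ->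
  (0 < sf)%N -> (0 < sh)%N -> ((sa + sb).-2 = Z1)%N ->
  ((sh + sf).-1 <= maxn (sa + sc).-1 (sb + sd).-1)%N -> (sb + sd <= sa + sc)%N ->
  (x <= maxn sb (sb.+1 + sh).-1)%N ->
  (x <= Z1 + sc.-1 + sd.-1 + 2 - sf.-1)%N /\ (sf.-1 <= Z1 + sc.-1 + sd.-1)%N.
Proof. move=> *; split; lia. Qed.

Lemma ar2 sa sb sc sd sf sh Z1 x : (0 < sa)%N -> (0 < sb)%N -> (0 < sc)%N -> (0 < sd)%N ->
  (0 < sf)%N -> (0 < sh)%N -> ((sa + sb).-2 = Z1)%N ->
  ((sh + sf).-1 <= maxn (sa + sc).-1 (sb + sd).-1)%N -> ~~ (sb + sd <= sa + sc)%N ->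
  (x <= maxn sa (sa.+1 + sh).-1)%N ->
  (x <= Z1 + sc.-1 + sd.-1 + 2 - sf.-1)%N /\ (sf.-1 <= Z1 + sc.-1 + sd.-1)%N.
Proof. move=> *; split; lia. Qed.

Lemma ar3 a b a' b' Z1 : (0 < a)%N -> (0 < b)%N -> (0 < a')%N -> (0 < b')%N ->
  ((a + b).-2 = Z1)%N -> ((a' + b').-2 = Z1)%N -> (a.-1 = a'.-1)%N -> a = a' /\ b = b'.
Proof. move=> *; split; lia. Qed.

Lemma ar4 a b Z1 : (0 < b)%N -> ((a + b).-2 = Z1)%N -> (a.-1 < Z1.+1)%N.
Proof. move=> *; lia. Qed.

Section Count.
Variables (Z1 : nat) (Rp F C D : {poly K}).
Hypotheses (mF : F \is monic) (mC : C \is monic) (mD : D \is monic).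

Definition Pv (p : {poly K} * {poly K}) : bool :=
  [&& pdeg (p.1 * p.2) == Z1, F %| p.1 * C - p.2 * D,
      p.1 * C != p.2 * D & coprimep (p.1 * p.2) Rp].

Definition Mb : nat := (Z1 + pdeg C + pdeg D + 2 - pdeg F)%N.

Definition encP (p : {poly K} * {poly K}) : {poly K} :=
  let H := (p.1 * C - p.2 * D) %/ F in
  if (size p.2 + size D <= size p.1 + size C)%N then p.2 + 'X^(size p.2) * H
  else p.1 + 'X^(size p.1) * H.

Definition enc (p : {poly K} * {poly K}) : 'I_Z1.+1 * bool * 'rV[K]_Mb :=
  (inord (size p.1).-1, (size p.2 + size D <= size p.1 + size C)%N, poly_rV (encP p)).

Lemma key A B : A \is monic -> B \is monic -> Pv (A, B) ->
  let H := (A * C - B * D) %/ F in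
  H != 0 /\ H * F = A * C - B * D /\
     (size (A * B)%R = (size A + size B).-1)%N /\
     (size (A * C - B * D)%R = (size H + size F).-1)%N /\
     (size (A * C - B * D)%R <= maxn (size A + size C).-1 (size B + size D).-1)%N /\
     (0 < size A)%N /\ (0 < size B)%N /\ (0 < size C)%N /\ (0 < size D)%N /\ (0 < size F)%N /\
         (0 < size H)%N.
Proof.
move=> mA mB /and4P[/eqP hZ hdv hne _] H.
have HF : H * F = A * C - B * D by rewrite /H divpK.
have E0 : A * C - B * D != 0 by rewrite subr_eq0.
have H0 : H != 0 by apply: contraNneq E0 => h0; rewrite -HF h0 mul0r.
have nz (p : {poly K}) : p \is monic -> (0 < size p)%N.
  by move=> /monic_neq0; rewrite size_poly_gt0.
split => //; split => //; split; first by rewrite size_monicM // monic_neq0.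
split; first by rewrite -HF size_mul // monic_neq0.
split.
  rewrite -(size_monicM mA (monic_neq0 mC)) -(size_monicM mB (monic_neq0 mD)).
  by rewrite -(size_polyN (B * D)) (leq_trans (size_polyD _ _)).
by do !(split; first exact: nz); rewrite size_poly_gt0.
Qed.

Lemma encP_size A B : A \is monic -> B \is monic -> Pv (A, B) ->
  (size (encP (A, B)) <= Mb)%N /\ (pdeg F <= Z1 + pdeg C + pdeg D)%N.
Proof.
move=> mA mB hP.
have [H0 [HF [sAB [sE [sEle [pA [pB [pC [pD [pF pH]]]]]]]]]] := @key A B mA mB hP.
move: hP => /and4P[/eqP hZ _ _ _].
move: hZ sE sEle; rewrite /Mb /pdeg /encP /= sAB.
set H := (A * C - B * D) %/ F => hZ sE sEle.
have {}pH : (0 < size H)%N := pH.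
have {}H0 : H != 0 := H0.
clearbody H.
have sHle : ((size H + size F).-1 <= maxn (size A + size C).-1 (size B + size D).-1)%N by rewrite -sE.
clear sE sEle.
case: ifP => fl.
  have := size_polyD B ('X^(size B) * H).
  rewrite size_monicM ?monicXn // size_polyXn => h.
  exact: (@ar1 _ _ _ _ _ _ _ _ pA pB pC pD pF pH hZ sHle fl h).
have := size_polyD A ('X^(size A) * H).
rewrite size_monicM ?monicXn // size_polyXn => h.
exact: (@ar2 _ _ _ _ _ _ _ _ pA pB pC pD pF pH hZ sHle (negbT fl) h).
Qed.

Lemma split_inj (B B' H H' : {poly K}) n : (size B <= n)%N -> (size B' <= n)%N ->
  B + 'X^n * H = B' + 'X^n * H' -> B = B' /\ H = H'.
Proof.
move=> sB sB' e.
have sX : size ('X^n : {poly K}) = n.+1 by rewrite size_polyXn.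
have e' : H * 'X^n + B = H' * 'X^n + B' by rewrite addrC mulrC e addrC mulrC.
split.
  by rewrite -(@modp_addl_mul_small _ 'X^n H B) ?sX // e' modp_addl_mul_small ?sX.
by rewrite -(@divp_addl_mul_small _ 'X^n H B) ?sX // e' divp_addl_mul_small ?sX.
Qed.

Lemma enc_inj A B A' B' : A \is monic -> B \is monic -> Pv (A, B) ->
  A' \is monic -> B' \is monic -> Pv (A', B') -> enc (A, B) = enc (A', B') -> (A, B) = (A', B').
Proof.
move=> mA mB hP mA' mB' hP' e.
have e1 : inord (size A).-1 = inord (size A').-1 :> 'I_Z1.+1 := congr1 (fun x => x.1.1) e.
have e2 : (size B + size D <= size A + size C)%N = (size B' + size D <= size A' + size C)%N :=
  congr1 (fun x => x.1.2) e.
have e3 : poly_rV (encP (A, B)) = poly_rV (encP (A', B')) :> 'rV[K]_Mb := congr1 (fun x => x.2) e.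
clear e.
have [s1 _] := @encP_size A B mA mB hP.
have [s1' _] := @encP_size A' B' mA' mB' hP'.
have eP : encP (A, B) = encP (A', B') :=
  etrans (esym (poly_rV_K s1)) (etrans (congr1 (@rVpoly _ _) e3) (poly_rV_K s1')).
have [H0 [HF [sAB [sE [sEle [pA [pB [pC [pD [pF pH]]]]]]]]]] := @key A B mA mB hP.
have [H0' [HF' [sAB' [sE' [sEle' [pA' [pB' [pC' [pD' [pF' pH']]]]]]]]]] := @key A' B' mA' mB' hP'.
move: hP hP' => /and4P[/eqP hZ _ _ _] /and4P[/eqP hZ' _ _ _].
move: hZ hZ'; rewrite /pdeg /= sAB sAB' => hZ hZ'.
have [eA eB] : size A = size A' /\ size B = size B'.
  have := congr1 val e1; rewrite /= !inordK.
  - exact: (@ar3 _ _ _ _ _ pA pB pA' pB' hZ hZ').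
  - exact: (@ar4 _ _ _ pB' hZ').
  - exact: (@ar4 _ _ _ pB hZ).
move: eP e2; rewrite /encP /= -eA -eB => eP e2.
have CF : C != 0 by exact: monic_neq0.
have DF : D != 0 by exact: monic_neq0.
move: HF HF'; set H := (A * C - B * D) %/ F; set H' := (A' * C - B' * D) %/ F => HF HF'.
have EA : A * C = H * F + B * D by rewrite HF subrK.
have EA' : A' * C = H' * F + B' * D by rewrite HF' subrK.
case: ifP eP => fl eP.
  have [eb eh] := @split_inj _ _ _ _ _ (leqnn _) (eq_leq (esym eB)) eP.
  have {}eh : H = H' := eh.
  have : A * C = A' * C by rewrite EA EA' eb eh.
  by move/(mulIf CF) => ->; rewrite eb.
have [ea eh] := @split_inj _ _ _ _ _ (leqnn _) (eq_leq (esym eA)) eP.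
have {}eh : H = H' := eh.
have EB : B * D = A * C - H * F by rewrite EA addrC addKr.
have EB' : B' * D = A' * C - H' * F by rewrite EA' addrC addKr.
have : B * D = B' * D by rewrite EB EB' ea eh.
by move/(mulIf DF) => ->; rewrite ea.
Qed.

Definition Lp := [seq (A, B) | A <- monic_le K Z1, B <- monic_le K Z1].

Lemma Lp_monic p : p \in Lp -> p.1 \is monic /\ p.2 \is monic.
Proof.
case/allpairsP => [[A B]] [/monic_le_elt [mA _] /monic_le_elt [mB _] ->].
by split.
Qed.

Lemma count_bound : (count Pv Lp <= Z1.+1 * 2 * #|K| ^ Mb)%N.
Proof.
rewrite -size_filter.
set s := filter Pv Lp.
have us : uniq s.
  apply: filter_uniq; apply: allpairs_uniq; try exact: monic_le_uniq.
  by move=> [? ?] [? ?] _ _ /= [-> ->].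
have inj : {in s &, injective enc}.
  move=> [A B] [A' B']; rewrite !mem_filter => /andP[h1 /Lp_monic [m1 m2]] /andP[h2 /Lp_monic [m3 m4]].
  exact: enc_inj.
have um : uniq (map enc s) by rewrite (map_inj_in_uniq inj).
rewrite -(size_map enc) -(card_uniqP um).
apply: (leq_trans (max_card _)).
by rewrite !card_prod card_ord card_bool card_mx mul1n.
Qed.

Lemma count_pos : (0 < count Pv Lp)%N -> (pdeg F <= Z1 + pdeg C + pdeg D)%N.
Proof.
rewrite -has_count => /hasP [[A B]] /Lp_monic [mA mB] hP.
by have [_ ->] := @encP_size A B mA mB hP.
Qed.

End Count.
End Aux.


Lemma pdegM_monic (K : finFieldType) (C D : {poly K}) : C \is monic -> D \is monic ->
  pdeg (C * D) = (pdeg C + pdeg D)%N.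
Proof.
move=> mC mD; rewrite /pdeg size_monicM ?monic_neq0 //.
have := monic_neq0 mC; have := monic_neq0 mD; rewrite -!size_poly_gt0.
move: (size C) (size D) => a b; lia.
Qed.

Theorem lemma6p4 :
  forall K : finFieldType, exists c : R, 0 < c /\
  forall (X : nat) (Rp F C D : {poly K}) (Z1 : nat),
    (0 < X)%N ->
    Rp \is monic -> (Z1 <= pdeg Rp)%N ->
    F \is monic -> F %| Rp ->
    C \is monic -> smooth X C -> D \is monic -> smooth X D ->
    (10 * pdeg C <= pdeg Rp)%N -> (10 * pdeg D <= pdeg Rp)%N ->
    \sum_(A <- monic_le K Z1) \sum_(B <- monic_le K Z1
            | [&& pdeg (A * B) == Z1, F %| A * C - B * D,
                  A * C != B * D & coprimep (A * B) Rp])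
        (sqrt (pabs (A * B)))^-1
    <= c * (sqrt ((#|K|%:R : R) ^+ Z1) * (Z1.+1)%:R * pabs (C * D) / pabs F).
Proof.
move=> K.
have qn : (0 < #|K|)%N by apply/card_gt0P; exists 0.
set q : R := #|K|%:R.
have q0 : 0 < q by rewrite ltr0n.
exists (2 * q ^+ 2); split; first by rewrite mulr_gt0 // exprn_gt0.
move=> X Rp F C D Z1 _ _ _ mF _ mC _ mD _ _ _.
set s := sqrt (q ^+ Z1).
have qZ0 : 0 < q ^+ Z1 by rewrite exprn_gt0.
have s0 : 0 < s by apply/RltP/sqrt_lt_R0/RltP.
have ss : s * s = q ^+ Z1 by rewrite -RmultE sqrt_sqrt //; apply/RleP/ltW.
set N := count (Pv K Z1 Rp F C D) (Lp K Z1).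
have -> : \sum_(A <- monic_le K Z1) \sum_(B <- monic_le K Z1
            | [&& pdeg (A * B) == Z1, F %| A * C - B * D,
                  A * C != B * D & coprimep (A * B) Rp])
        (sqrt (pabs (A * B)))^-1 = N%:R * s^-1.
  transitivity (\sum_(p <- Lp K Z1 | Pv K Z1 Rp F C D p) s^-1).
    rewrite [RHS]big_mkcond /Lp big_allpairs.
    rewrite -[RHS]/(\sum_(A <- monic_le K Z1) \sum_(B <- monic_le K Z1) (if Pv K Z1 Rp F C D (A, B) then s^-1 else 0)).
    apply: eq_bigr => A _.
    rewrite big_mkcond; apply: eq_bigr => B _ /=.
    rewrite [in RHS]/Pv /=.
    case: ifP => // h.
    by case/and4P: h => /eqP hZ _ _ _; rewrite /pabs /s /q -hZ.
  rewrite (eq_bigr (fun _ => 1 * s^-1)); last by move=> *; rewrite mul1r.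
  rewrite -mulr_suml /N -sum1_count natr_sum.
  by [].
have hN := @count_bound K Z1 Rp F C D mF mC mD.
rewrite -/N in hN.
have RHS0 : 0 <= 2 * q ^+ 2 * (s * (Z1.+1)%:R * pabs (C * D) / pabs F).
  by rewrite /pabs -/q !mulr_ge0 ?divr_ge0 ?exprn_ge0 ?ler0n ?ltW ?invr_gt0 ?exprn_gt0.
case: (posnP N) => [-> | Npos]; first by rewrite mul0r.
have hf := @count_pos K Z1 Rp F C D mF mC mD Npos.
apply: (@le_trans _ _ ((Z1.+1 * 2 * #|K| ^ Mb K Z1 F C D)%N%:R * s^-1)).
  by rewrite ler_pM2r ?invr_gt0 // ler_nat.
rewrite le_eqVlt; apply/orP; left; apply/eqP.
rewrite /pabs -/q (@pdegM_monic K C D mC mD) natrM natrM natrX -/q.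
set e := q ^+ Mb K Z1 F C D.
set f := q ^+ pdeg F.
have f0 : f != 0 by rewrite expf_neq0 // gt_eqF.
have hE : e = q ^+ 2 * q ^+ (pdeg C + pdeg D) * (s * s) / f.
  rewrite ss -!exprD /e /f /Mb; apply/(mulIf f0).
  rewrite mulfVK // -exprD; congr (_ ^+ _); lia.
rewrite hE; field.
by rewrite f0 gt_eqF.
Qed.
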